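(* Let $\mathcal{D}=\{t_1,\dots,t_n\}$ be a relational database whose tables are indexed according to a topological order of its (acyclic) foreign-key graph, with the relation $\preceq$ (affect-or-equal) defined below. For indices $i\le j$, we have $t_i\preceq t_j$ if and only if $t_i$ and $t_j$ are connected in the subgraph $\mathcal{G}_j$ of the foreign-key graph induced on the vertices $t_1,t_2,\dots,t_j$, where connectivity ignores edge directions and every table is considered connected to itself.
   Context: A relational database is a finite set of tables $t_1,\dots,t_n$. A foreign key constraint $\phi_{ij}$ means that table $t_i$ is a parent of table $t_j$ (i.e. $t_j$ references $t_i$); $\Phi_j$ denotes the set of all foreign key constraints on $t_j$. The foreign-key graph is the directed graph whose vertices are the tables, with an edge between $t_i$ and $t_j$ (directed from parent $t_i$ to child $t_j$) whenever some $\phi_{ij}\in\Phi_j$; it is assumed acyclic, and the indices are chosen according to a topological order, so that $\phi_{ij}\in\Phi_j$ implies $i<j$. Write $\mathbb{N}_m=\{1,2,\dots,m\}$. The relation ascend-or-equal $\preceq^*$ is defined by: $t_i\preceq^* t_j$ iff $i=j$, or there exists $k\in\mathbb{N}_n$ with $\phi_{ik}\in\Phi_k$ and $t_k\preceq^* t_j$. The relation affect-or-equal $\preceq$ is the (smallest) relation satisfying: $t_i\preceq t_j$ iff $t_i\preceq^* t_j$, or [$i<j$ and there exists $k\in\mathbb{N}_{j-1}\setminus\{i\}$ such that ($t_i\preceq t_k$ or $t_k\preceq t_i$) and $t_k\preceq t_j$]. *)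

(* Defs.v *)
From mathcomp Require Import all_boot.
Set Implicit Arguments. Unset Strict Implicit. Unset Printing Implicit Defensive.

(* A database with tables t_1..t_n is represented by its number of tables n
   and the foreign-key relation [fk : rel nat]: [fk i j] means phi_ij \in Phi_j,
   i.e. t_i is a parent of t_j.  Well-formedness (topological indexing) is a
   hypothesis of the theorem: fk i j -> 1 <= i < j <= n. *)

Inductive asc_eq (n : nat) (fk : rel nat) : nat -> nat -> Prop :=
| asc_eq_refl i : asc_eq n fk i i
| asc_eq_step i k j : 1 <= k <= n -> fk i k -> asc_eq n fk k j -> asc_eq n fk i j.

(* affect-or-equal  t_i <= t_j : the smallest relation satisfying the
   defining equivalence (least fixed point = inductive closure). *)
Inductive aff_eq (n : nat) (fk : rel nat) : nat -> nat -> Prop :=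
| aff_eq_asc i j : asc_eq n fk i j -> aff_eq n fk i j
| aff_eq_step i k j : i < j -> 1 <= k <= j.-1 -> k != i ->
    (aff_eq n fk i k \/ aff_eq n fk k i) -> aff_eq n fk k j -> aff_eq n fk i j.

Inductive conn_in (fk : rel nat) (j : nat) : nat -> nat -> Prop :=
| conn_in_refl a : conn_in fk j a a
| conn_in_step a b c : 1 <= a <= j -> 1 <= b <= j -> (fk a b || fk b a) ->
    conn_in fk j b c -> conn_in fk j a c.

(* Main.v *)
Require Import Defs.
From mathcomp Require Import all_boot.
From mathcomp Require Import zify.
Set Implicit Arguments. Unset Strict Implicit.

Lemma conn_trans fk j a b c : conn_in fk j a b -> conn_in fk j b c -> conn_in fk j a c.
Proof.
elim=> [//|x y z hx hy e _ IH] H.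
exact: (conn_in_step hx hy e (IH H)).
Qed.

Lemma conn_sym fk j a c : conn_in fk j a c -> conn_in fk j c a.
Proof.
elim=> [x|x y z hx hy e _ IH]; first exact: conn_in_refl.
apply: conn_trans IH _.
apply: (conn_in_step hy hx _ (conn_in_refl _ _ _)); by rewrite orbC.
Qed.

Lemma conn_mono fk x y a b : x <= y -> conn_in fk x a b -> conn_in fk y a b.
Proof.
move=> hxy; elim=> [z|u v w hu hv e _ IH]; first exact: conn_in_refl.
apply: (conn_in_step _ _ e IH).
- move: hu => /andP [h1 h2]; apply/andP; split => //; lia.
- move: hv => /andP [h1 h2]; apply/andP; split => //; lia.
Qed.

Section S.
Variables (n : nat) (fk : rel nat).
Hypothesis fk_wf : forall i j, fk i j -> (1 <= i) && (i < j) && (j <= n).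

Lemma wfE i j : fk i j -> [/\ 1 <= i, i < j & j <= n].
Proof. by move/fk_wf => /andP [/andP [? ?] ?]. Qed.

Lemma asc_conn a b : asc_eq n fk a b -> a <= b /\ conn_in fk b a b.
Proof.
elim=> [x|i k j hk e _ [hkj IH]]; first by split => //; exact: conn_in_refl.
have [h1 h2 h3] := wfE e.
split; first lia.
apply: (conn_in_step _ _ _ IH).
- apply/andP; split => //; lia.
- apply/andP; split => //; lia.
- by rewrite e.
Qed.

Lemma aff_conn_le b : forall a c, c <= b -> aff_eq n fk a c -> a <= c /\ conn_in fk c a c.
Proof.
elim: b => [|b IHb] a c hc H; move: H hc.
- case=> [i j A|i k j hij] hc; first exact: (asc_conn A).
  lia.
- elim=> [i j A|i k j hij hk hki Hor _ IH2] hc; first exact: (asc_conn A).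
  have [hkj {}IH2] := IH2 hc.
  split; first lia.
  apply: conn_trans IH2.
  case: Hor => [H|H].
  + have [hik C] := IHb i k ltac:(lia) H.
    apply: conn_mono C; lia.
  + have [hik C] := IHb k i ltac:(lia) H.
    apply: conn_sym; apply: conn_mono C; lia.
Qed.

Lemma aff_conn a b : aff_eq n fk a b -> a <= b /\ conn_in fk b a b.
Proof. exact: (@aff_conn_le b a b (leqnn b)). Qed.

Lemma conn_aff j : j <= n -> forall a c, conn_in fk j a c -> c = j -> aff_eq n fk a j.
Proof.
move=> hj a c; elim=> [x|x y z hx hy e _ IH] Hz.
  rewrite Hz; exact: (aff_eq_asc (asc_eq_refl n fk _)).
have Hy := IH Hz.
have [->|hxj] := eqVneq x j; first exact: (aff_eq_asc (asc_eq_refl n fk _)).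
have hxy : x != y.
  apply/eqP => E; subst y; move: e; rewrite orbb => /wfE [_ ? _]; lia.
have [Eyj|hyj] := eqVneq y j.
  subst y; apply: aff_eq_asc.
  case/orP: e => e.
  - apply: (asc_eq_step _ e (asc_eq_refl _ _ _)); apply/andP; split => //; lia.
  - have [? ? ?] := wfE e; move: hx => /andP [? ?]; lia.
apply: (aff_eq_step (k := y)).
- move: hx => /andP [? ?]; lia.
- move: hy => /andP [? ?]; apply/andP; split => //; lia.
- by rewrite eq_sym.
- case/orP: e => e.
  + left; apply: aff_eq_asc; apply: (asc_eq_step _ e (asc_eq_refl _ _ _)).
    move: hy => /andP [? ?]; apply/andP; split => //; lia.
  + right; apply: aff_eq_asc; apply: (asc_eq_step _ e (asc_eq_refl _ _ _)).
    move: hx => /andP [? ?]; apply/andP; split => //; lia.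
- exact: Hy.
Qed.
End S.

Theorem lemma3p4 (n : nat) (fk : rel nat)
  (fk_wf : forall i j, fk i j -> (1 <= i) && (i < j) && (j <= n))
  (i j : nat) (hi : 1 <= i) (hij : i <= j) (hj : j <= n) :
  aff_eq n fk i j <-> conn_in fk j i j.
Proof.
split.
- by move/(aff_conn fk_wf) => [].
- by move=> C; apply: (conn_aff fk_wf hj C).
Qed.
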